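(* Let $\gamma>0$. For each $n\in\mathbb{N}$ and $j=0,\dots,n$ let $a(n,j)\in(0,1)$ and $b(n,j)>0$, and suppose $$\lim_{n\to\infty}\frac{\log b(n,j)}{\log a(n,j)}=\gamma$$ uniformly in $j$ (i.e. for every $\varepsilon>0$ there is $n_0$ with $|\log b(n,j)/\log a(n,j)-\gamma|<\varepsilon$ for all $n\ge n_0$ and all $j=0,\dots,n$). Define $A_k(n)=\prod_{j=k}^n a(n,j)$ and $B_k(n)=\prod_{j=k}^n b(n,j)$. Then $\lim_{n\to\infty}\big(A_k(n)^\gamma-B_k(n)\big)=0$ uniformly in $k\in\{0,\dots,n\}$. *)

(* Defs.v *)
From Stdlib Require Import Reals Lra Lia.
Open Scope R_scope.

(* prod_from_to f k n = f k * f (k+1) * ... * f n  (empty product 1 if k > n). *)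
Fixpoint prod_len (f : nat -> R) (k m : nat) : R :=
  match m with
  | O => 1
  | S m' => f k * prod_len f (S k) m'
  end.

Definition prod_from_to (f : nat -> R) (k n : nat) : R :=
  prod_len f k (S n - k).

(* Main.v *)
Require Import Defs.
From Stdlib Require Import Reals.
From Stdlib Require Import Lra Lia Psatz.
Open Scope R_scope.

Lemma exp_le_mono (x y : R) : x <= y -> exp x <= exp y.
Proof.
  intros [H|H]; [left; apply exp_increasing; auto | right; subst; auto].
Qed.

Lemma exp_diff (u v : R) : v <= u -> exp u - exp v <= exp u * (u - v).
Proof.
  intros H.
  assert (E : exp v = exp u * exp (v - u)).
  { rewrite <- exp_plus. f_equal. ring. }
  pose proof (exp_ineq1_le (v - u)). pose proof (exp_pos u). nra.
Qed.

Lemma key (e g S T : R) : 0 < g -> 0 < e -> e <= g / 2 -> S <= 0 ->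
  Rabs (T - g * S) <= - e * S -> Rabs (exp (g * S) - exp T) <= 2 * e / g.
Proof.
  intros Hg He Heg HS HT.
  assert (HT1 : - (- e * S) <= T - g * S).
  { pose proof (Rle_abs (- (T - g * S))). rewrite Rabs_Ropp in H. lra. }
  assert (HT2 : T - g * S <= - e * S) by (pose proof (Rle_abs (T - g * S)); lra).
  set (y := - g * S / 2).
  assert (Hy : 0 <= y) by (unfold y; nra).
  assert (Ey : y <= exp y) by (pose proof (exp_ineq1_le y); lra).
  assert (Py : 0 < exp y) by apply exp_pos.
  assert (Eneg : exp (- y) * exp y = 1).
  { rewrite <- exp_plus. replace (- y + y) with 0 by ring. apply exp_0. }
  assert (Pn : 0 < exp (-y)) by apply exp_pos.
  assert (Bd : exp (- y) * (- e * S) <= 2 * e / g).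
  { assert (H : - e * S = 2 * e / g * y) by (unfold y; field; lra).
    rewrite H.
    assert (0 <= 2 * e / g) by (apply Rmult_le_pos; [lra| apply Rlt_le, Rinv_0_lt_compat; lra]).
    nra. }
  assert (Hes : 0 <= - e * S) by nra.
  destruct (Rle_dec T (g * S)) as [Hle | Hgt].
  - pose proof (exp_diff (g * S) T Hle).
    assert (exp (g * S) <= exp (- y)) by (apply exp_le_mono; unfold y; nra).
    pose proof (exp_le_mono T (g*S) Hle).
    rewrite Rabs_right by lra.
    assert (exp (g * S) * (g * S - T) <= exp (- y) * (- e * S)).
    { apply Rmult_le_compat; try lra. left; apply exp_pos. }
    lra.
  - assert (Hle : g * S <= T) by lra.
    pose proof (exp_diff T (g * S) Hle).
    assert (exp T <= exp (- y)) by (apply exp_le_mono; unfold y; nra).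
    pose proof (exp_le_mono _ _ Hle).
    rewrite Rabs_left1 by lra.
    assert (exp T * (T - g * S) <= exp (- y) * (- e * S)).
    { apply Rmult_le_compat; try lra. left; apply exp_pos. }
    lra.
Qed.

Lemma prod_rep (g e : R) (a b : nat -> R) (n : nat)
  (ha : forall j, (j <= n)%nat -> 0 < a j < 1)
  (hb : forall j, (j <= n)%nat -> 0 < b j)
  (hl : forall j, (j <= n)%nat -> Rabs (ln (b j) / ln (a j) - g) < e) :
  forall m k, (forall i, (i < m)%nat -> (k + i <= n)%nat) ->
  exists S T, prod_len a k m = exp S /\ prod_len b k m = exp T /\ S <= 0 /\
     Rabs (T - g * S) <= - e * S.
Proof.
  induction m as [|m IH]; intros k Hk.
  - exists 0, 0. simpl. rewrite exp_0. repeat split; try lra.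
    replace (0 - g * 0) with 0 by ring. rewrite Rabs_R0. lra.
  - destruct (IH (S k)) as (S0 & T0 & HA & HB & HS & HT).
    { intros i Hi. specialize (Hk (S i)). lia. }
    assert (Kn : (k <= n)%nat) by (specialize (Hk 0%nat); lia).
    destruct (ha k Kn) as [ha1 ha2]. pose proof (hb k Kn) as hb1.
    pose proof (hl k Kn) as hl1.
    set (L := ln (a k)) in *. set (M := ln (b k)) in *.
    assert (HL : L < 0) by (unfold L; rewrite <- ln_1; apply ln_increasing; lra).
    assert (HM : Rabs (M - g * L) <= - e * L).
    { replace (M - g * L) with (L * (M / L - g)) by (field; lra).
      rewrite Rabs_mult, Rabs_left by lra. nra. }
    exists (L + S0), (M + T0). simpl. rewrite HA, HB, !exp_plus.
    unfold L, M. rewrite !exp_ln by lra. unfold L, M in HM, HL. repeat split; try lra.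
    replace (ln (b k) + T0 - g * (ln (a k) + S0)) with ((ln (b k) - g * ln (a k)) + (T0 - g * S0)) by ring.
    pose proof (Rabs_triang (ln (b k) - g * ln (a k)) (T0 - g * S0)). lra.
Qed.

Theorem mainTheorem17 (gamma : R) (a b : nat -> nat -> R)
  (hgamma : 0 < gamma)
  (ha : forall n j : nat, (j <= n)%nat -> 0 < a n j < 1)
  (hb : forall n j : nat, (j <= n)%nat -> 0 < b n j)
  (hlim : forall eps : R, 0 < eps -> exists n0 : nat,
      forall n j : nat, (n0 <= n)%nat -> (j <= n)%nat ->
        Rabs (ln (b n j) / ln (a n j) - gamma) < eps) :
  forall eps : R, 0 < eps -> exists N : nat,
    forall n k : nat, (N <= n)%nat -> (k <= n)%nat ->
      Rabs (Rpower (prod_from_to (a n) k n) gamma - prod_from_to (b n) k n) < eps.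
Proof.
  intros eps Heps.
  set (e := Rmin (gamma / 2) (eps * gamma / 4)).
  assert (He : 0 < e) by (unfold e; apply Rmin_pos; nra).
  destruct (hlim e He) as [n0 Hn0].
  exists n0. intros n k Hn Hk.
  destruct (prod_rep gamma e (a n) (b n) n (ha n) (hb n) (fun j Hj => Hn0 n j Hn Hj)
     (S n - k) k) as (S0 & T0 & HA & HB & HS & HT).
  { intros i Hi. lia. }
  unfold prod_from_to. rewrite HA, HB. unfold Rpower. rewrite ln_exp.
  assert (Hle : e <= gamma / 2) by apply Rmin_l.
  assert (Hle2 : e <= eps * gamma / 4) by apply Rmin_r.
  pose proof (key e gamma S0 T0 hgamma He Hle HS HT).
  assert (2 * e / gamma <= eps / 2).
  { apply (Rmult_le_reg_r gamma); [lra|]. field_simplify; lra. }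
  lra.
Qed.
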